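(* Let $(G,t)$ be a non-trivial problem instance, $X$ a modulator of $G$, $C$ a connected component of $G-X$, $T$ the block-cut tree of $C$, and let $\langle a_1,B_1,a_2,B_2,a_3,B_3,a_4\rangle$ be a simple path in $T$ (with $a_i$ articulation vertices and $B_i$ blocks) such that $N_G\big((V(B_1)\cup V(B_2)\cup V(B_3))\setminus\{a_1,a_4\}\big)=\{a_1,a_4\}$. Let $G'$ be obtained from $G$ by contracting $B_1$ into $a_1$ (replacing $V(B_1)$ by the single vertex $a_1$ adjacent to all of $N_G(V(B_1))$). Then $(G,t)$ has a solution if and only if $(G',t)$ has a solution.
   Context: $\mathrm{tw}$ is treewidth. A solution for $(G,t)$ is $S\subseteq V(G)$ with $|S|\le t$ and $\mathrm{tw}(G-S)\le 2$. A modulator of $G$ is $X$ with $\mathrm{tw}(G-X)\le 2$. $(G,t)$ is trivial if $|V(G)|\le 4$, or $\mathrm{tw}(G)\le 2$, or $t=0$, or some connected subgraph $H$ satisfies $\mathrm{tw}\big(G[N_G[H]]\cup\binom{N_G(H)}{2}\big)\le 2$ ($N_G(H)$: vertices outside $H$ adjacent to $H$; $N_G[H]=V(H)\cup N_G(H)$; $\cup\binom{N_G(H)}{2}$ adds all edges among $N_G(H)$); otherwise non-trivial. For $U\subseteq V(G)$, $N_G(U)$ is the set of vertices outside $U$ adjacent to $U$. A block of a connected graph is a maximal biconnected subgraph (biconnected = connected without articulation vertex); the block-cut tree of a connected graph $C$ is the bipartite tree whose nodes are the articulation vertices of $C$ and the blocks of $C$, with articulation vertex $a$ adjacent to block $B$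 iff $a\in V(B)$. *)

(* Defs.v *)
(* Graphs: a finite ground type T, a vertex set V : {set T}
   and an adjacency relation e : rel T (only edges inside the vertex set count). *)
From mathcomp Require Import all_boot.
Set Implicit Arguments. Unset Strict Implicit. Unset Printing Implicit Defensive.

Section Graphs.
Variable T : finType.

Definition restr (e : rel T) (W : {set T}) : rel T :=
  [rel x y | [&& e x y, x \in W & y \in W]].

(* G[W] is connected (the empty vertex set counts as connected here;
   nonemptiness is required separately where needed) *)
Definition connected_in (e : rel T) (W : {set T}) : Prop :=
  forall x y, x \in W -> y \in W -> connect (restr e W) x y.

Definition nbh (V : {set T}) (e : rel T) (U : {set T}) : {set T} :=
  [set y in V :\: U | [exists x in U, e x y]].

Definition cutv (e : rel T) (W : {set T}) (v : T) : Prop :=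
  v \in W /\ exists x y, [/\ x \in W :\ v, y \in W :\ v &
                            ~~ connect (restr e (W :\ v)) x y].

Definition biconnected (e : rel T) (W : {set T}) : Prop :=
  W != set0 /\ connected_in e W /\ forall v, ~ cutv e W v.

Definition block (e : rel T) (C B : {set T}) : Prop :=
  [/\ B \subset C, biconnected e B &
      forall B' : {set T}, B \subset B' -> B' \subset C -> biconnected e B' -> B' = B].

Definition component (V : {set T}) (e : rel T) (X C : {set T}) : Prop :=
  [/\ C != set0, C \subset V :\: X, connected_in e C & nbh (V :\: X) e C = set0].

End Graphs.

(* Trees: symmetric irreflexive relation on a nonempty finite type, connected,
   with exactly #|I| - 1 (undirected) edges. *)
Definition is_tree (I : finType) (r : rel I) : Prop :=
  [/\ symmetric r, irreflexive r, 0 < #|I|,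
      (forall i j, connect r i j) &
      #|[set p : I * I | r p.1 p.2]| = 2 * (#|I| - 1)].

Definition tw_le (T : finType) (k : nat) (W : {set T}) (e : rel T) : Prop :=
  exists (I : finType) (r : rel I) (bag : I -> {set T}),
    [/\ is_tree r,
        (forall i, bag i \subset W) /\
        (forall i, #|bag i| <= k.+1),
        (forall v, v \in W -> exists i, v \in bag i),
        (forall u v, u \in W -> v \in W -> e u v -> exists i, (u \in bag i) && (v \in bag i)) &
        forall v, v \in W ->
          forall i j, v \in bag i -> v \in bag j ->
            connect [rel x y | [&& r x y, v \in bag x & v \in bag y]] i j].

Section Instances.
Variable T : finType.

Definition solution (V : {set T}) (e : rel T) (t : nat) (S : {set T}) : Prop :=
  [/\ S \subset V, #|S| <= t & tw_le 2 (V :\: S) e].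

Definition has_solution (V : {set T}) (e : rel T) (t : nat) : Prop :=
  exists S, solution V e t S.

Definition modulator (V : {set T}) (e : rel T) (X : {set T}) : Prop :=
  X \subset V /\ tw_le 2 (V :\: X) e.

Definition torso_rel (V : {set T}) (e : rel T) (H : {set T}) : rel T :=
  [rel x y | e x y || [&& x \in nbh V e H, y \in nbh V e H & x != y]].

Definition trivial_instance (V : {set T}) (e : rel T) (t : nat) : Prop :=
  #|V| <= 4 \/ tw_le 2 V e \/ t = 0 \/
  exists H : {set T}, [/\ H \subset V, H != set0, connected_in e H &
     tw_le 2 (H :|: nbh V e H) (torso_rel V e H)].

Definition contract_V (V B : {set T}) (a : T) : {set T} := V :\: (B :\ a).

Definition contract_e (V : {set T}) (e : rel T) (B : {set T}) (a : T) : rel T :=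
  [rel x y | (x != y) &&
     (if x == a then y \in nbh V e B
      else if y == a then x \in nbh V e B else e x y)].
End Instances.

(* Main.v *)
Require Import Defs.
From mathcomp Require Import all_boot zify.

Module Helpers.
Set Implicit Arguments. Unset Strict Implicit. Unset Printing Implicit Defensive.

Section Conn.
Variable T : finType.
Variable e : rel T.
Hypothesis esym : symmetric e.

Lemma restr_sym W : symmetric (restr e W).
Proof. by move=> x y; rewrite /restr /= esym; case: (x \in W); case: (y \in W); rewrite ?andbT ?andbF. Qed.

Lemma connect_restr_mono (A B : {set T}) x y :
  A \subset B -> connect (restr e A) x y -> connect (restr e B) x y.
Proof.
move=> sAB; apply: connect_sub => u v /=/and3P[euv uA vA].
by apply: connect1; rewrite /restr /= euv (subsetP sAB _ uA) (subsetP sAB _ vA).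
Qed.

Lemma conn_union (A B : {set T}) :
  connected_in e A -> connected_in e B ->
  (exists x y, [/\ x \in A, y \in B & (x == y) || e x y]) ->
  connected_in e (A :|: B).
Proof.
move=> cA cB [x [y [xA yB lxy]]].
have sA : A \subset A :|: B by apply: subsetUl.
have sB : B \subset A :|: B by apply: subsetUr.
have xy : connect (restr e (A :|: B)) x y.
  case/orP: lxy => [/eqP->|exy]; first exact: connect0.
  by apply: connect1; rewrite /restr /= exy (subsetP sA _ xA) (subsetP sB _ yB).
have csym := sym_connect_sym (restr_sym (A :|: B)).
move=> u v; rewrite !inE => /orP[uA|uB] /orP[vA|vB].
- exact: connect_restr_mono sA (cA _ _ uA vA).
- apply: connect_trans (connect_restr_mono sA (cA _ _ uA xA)) _.
  exact: connect_trans xy (connect_restr_mono sB (cB _ _ yB vB)).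
- rewrite csym; apply: connect_trans (connect_restr_mono sA (cA _ _ vA xA)) _.
  exact: connect_trans xy (connect_restr_mono sB (cB _ _ yB uB)).
- exact: connect_restr_mono sB (cB _ _ uB vB).
Qed.

Lemma bic_minus W v : biconnected e W -> connected_in e (W :\ v).
Proof.
case=> _ [cW ncut] x y; case: (boolP (v \in W)) => vW.
  move=> xW yW; apply/negPn/negP => nc; apply: (ncut v); split=> //.
  by exists x, y.
have -> : W :\ v = W.
  by apply/setP=> z; rewrite !inE; case: eqP => // ->; rewrite (negbTE vW).
exact: cW.
Qed.


Definition lnk (A B : {set T}) := exists x y, [/\ x \in A, y \in B & (x == y) || e x y].

Lemma lnk_mono (A B A' B' : {set T}) : lnk A B -> A \subset A' -> B \subset B' -> lnk A' B'.
Proof.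
by move=> [x [y [xA yB l]]] sA sB; exists x, y; rewrite (subsetP sA _ xA) (subsetP sB _ yB).
Qed.

Lemma lnk_sym (A B : {set T}) : lnk A B -> lnk B A.
Proof. by move=> [x [y [xA yB l]]]; exists y, x; rewrite eq_sym esym. Qed.

Lemma lnk_D (A B : {set T}) v : lnk (A :\ v) (B :\ v) -> lnk A B.
Proof. by move=> l; apply: lnk_mono l _ _; apply: subsetDl. Qed.

Lemma conn3 (A B C : {set T}) : connected_in e A -> connected_in e B -> connected_in e C ->
  lnk A B -> lnk B C -> connected_in e (A :|: B :|: C).
Proof.
move=> cA cB cC lAB lBC; apply: conn_union => //; first exact: conn_union.
by apply: lnk_mono lBC _ (subxx _); rewrite subsetUr.
Qed.

Lemma bic3 (W1 W2 W3 : {set T}) : biconnected e W1 -> biconnected e W2 -> biconnected e W3 ->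
  (forall v, (lnk (W1 :\ v) (W2 :\ v) /\ lnk (W2 :\ v) (W3 :\ v)) \/
             (lnk (W1 :\ v) (W2 :\ v) /\ lnk (W1 :\ v) (W3 :\ v)) \/
             (lnk (W1 :\ v) (W3 :\ v) /\ lnk (W2 :\ v) (W3 :\ v))) ->
  biconnected e (W1 :|: W2 :|: W3).
Proof.
move=> b1 b2 b3 L.
have key : forall A B C : {set T}, connected_in e A -> connected_in e B -> connected_in e C ->
   (lnk A B /\ lnk B C) \/ (lnk A B /\ lnk A C) \/ (lnk A C /\ lnk B C) ->
   connected_in e (A :|: B :|: C).
  move=> A B C cA cB cC [[l1 l2]|[[l1 l2]|[l1 l2]]].
  - exact: conn3.
  - by rewrite [A :|: B]setUC; apply: conn3 => //; apply: lnk_sym.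
  - by rewrite setUAC; apply: conn3 => //; apply: lnk_sym.
have [x0 x0W] : exists x, x \in W1.
  by case: b1 => /set0Pn [x xW] _; exists x.
split.
  by apply/set0Pn; exists x0; rewrite !inE x0W.
split.
  have [b1' [c1 _]] := b1; have [_ [c2 _]] := b2; have [_ [c3 _]] := b3.
  apply: key => //.
  case: (L x0) => [[l1 l2]|[[l1 l2]|[l1 l2]]];
   [left|right;left|right;right]; split; apply: lnk_D; eassumption.
move=> v [vU [x [y [xU yU nc]]]].
have eqU : (W1 :|: W2 :|: W3) :\ v = (W1 :\ v) :|: (W2 :\ v) :|: (W3 :\ v).
  by apply/setP=> z; rewrite !inE; case: (z == v).
move: xU yU nc; rewrite eqU => xU yU /negP; apply.
by apply: key => //; apply: bic_minus.
Qed.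

Lemma bic2 (W1 W2 : {set T}) : biconnected e W1 -> biconnected e W2 ->
  (forall v, lnk (W1 :\ v) (W2 :\ v)) -> biconnected e (W1 :|: W2).
Proof.
move=> b1 b2 L; rewrite -(setUid W2); rewrite setUA.
apply: bic3 => // v; left; split=> //.
have [x [y [xA yB _]]] := L v; by exists y, y; rewrite yB eqxx.
Qed.

End Conn.

Section Blocks.
Variable T : finType.
Variable e : rel T.
Hypothesis esym : symmetric e.
Variable C : {set T}.

Lemma blocks_eq3 (B1 B2 B3 : {set T}) : block e C B1 -> block e C B2 -> block e C B3 ->
  biconnected e (B1 :|: B2 :|: B3) -> B1 = B2.
Proof.
move=> [s1 _ m1] [s2 _ m2] [s3 _ m3] b.
have sU : B1 :|: B2 :|: B3 \subset C by rewrite !subUset s1 s2 s3.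
have h1 : B1 :|: B2 :|: B3 = B1 by apply: m1 => //; rewrite -setUA subsetUl.
have h2 : B1 :|: B2 :|: B3 = B2.
  by apply: m2 => //; rewrite -setUA setUA [B1 :|: B2]setUC -setUA subsetUl.
by rewrite -h1 -{2}h2.
Qed.

Lemma lnk_pt (A B : {set T}) v x : x \in A -> x \in B -> x != v -> lnk e (A :\ v) (B :\ v).
Proof. by move=> xA xB xv; exists x, x; rewrite !inE xv xA xB eqxx. Qed.

Lemma lnk_edge (A B : {set T}) v x y : x \in A -> y \in B -> x != v -> y != v ->
  (x == y) || e x y -> lnk e (A :\ v) (B :\ v).
Proof. by move=> xA yB xv yv l; exists x, y; rewrite !inE xv yv xA yB. Qed.

Lemma tri_blocks (B1 B2 B3 : {set T}) p q x y :
  block e C B1 -> block e C B2 -> block e C B3 ->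
  p \in B1 -> p \in B2 -> q \in B2 -> q \in B3 -> x \in B1 -> y \in B3 ->
  (x == y) || e x y -> p != q -> x != p -> y != p -> x != q -> y != q -> B1 = B2.
Proof.
move=> k1 k2 k3 p1 p2 q2 q3 x1 y3 l pq xp yp xq yq.
apply: (blocks_eq3 k1 k2 k3).
have [_ b1 _] := k1; have [_ b2 _] := k2; have [_ b3 _] := k3.
apply: bic3 => // v.
case: (eqVneq v p) => [->|vp].
  right; right; split; first exact: (lnk_edge x1 y3).
  by apply: (lnk_pt q2 q3); rewrite eq_sym.
case: (eqVneq v q) => [->|vq].
  right; left; split; first by apply: (lnk_pt p1 p2); rewrite // eq_sym.
  exact: (lnk_edge x1 y3).
by left; split; [apply: (lnk_pt p1 p2) | apply: (lnk_pt q2 q3)]; rewrite // eq_sym.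
Qed.

Lemma shared2 (B B' : {set T}) x y : block e C B -> block e C B' ->
  x \in B -> x \in B' -> y \in B -> y \in B' -> x != y -> B = B'.
Proof.
move=> k k' xB xB' yB yB' xy.
apply: (blocks_eq3 k k' k'); rewrite -setUA setUid.
have [_ b _] := k; have [_ b' _] := k'.
apply: bic2 => // v; case: (eqVneq v x) => [->|vx].
  by apply: (lnk_pt yB yB'); rewrite eq_sym.
by apply: (lnk_pt xB xB'); rewrite eq_sym.
Qed.

Lemma edge2 (B B' : {set T}) a x y : block e C B -> block e C B' ->
  a \in B -> a \in B' -> x \in B -> y \in B' -> x != a -> y != a -> e x y -> B = B'.
Proof.
move=> k k' aB aB' xB yB' xa ya exy.
apply: (blocks_eq3 k k' k'); rewrite -setUA setUid.
have [_ b _] := k; have [_ b' _] := k'.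
apply: bic2 => // v; case: (eqVneq v a) => [->|va].
  by apply: (lnk_edge xB yB') => //; rewrite exy orbT.
by apply: (lnk_pt aB aB'); rewrite eq_sym.
Qed.

End Blocks.

Section Minor.
Variable T : finType.

Lemma tw_minor (k : nat) (W W' : {set T}) (e e' : rel T) (f : T -> T) :
  tw_le k W e ->
  (forall w, w \in W' -> exists2 x, x \in W & f x = w) ->
  (forall w, w \in W' -> connected_in e [set x in W | f x == w]) ->
  (forall u v, u \in W' -> v \in W' -> e' u v ->
     exists x y, [/\ x \in W, y \in W, f x = u, f y = v & e x y]) ->
  tw_le k W' e'.
Proof.
move=> [I [r [bag [tr [bsub bsz] cov edg con]]]] surj bc el.
pose bag' i := f @: [set x in bag i | f x \in W'].
have bag'P : forall i x, x \in bag i -> f x \in W' -> f x \in bag' i.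
  by move=> i x xi fx; apply/imsetP; exists x => //; rewrite inE xi fx.
exists I, r, bag'; split=> //.
- split=> i.
    by apply/subsetP => w /imsetP [x]; rewrite inE => /andP[_ fxW] ->.
  apply: leq_trans (leq_imset_card _ _) _; apply: leq_trans (bsz i).
  by apply: subset_leq_card; apply/subsetP => x; rewrite inE => /andP[].
- move=> w wW; have [x xW fx] := surj w wW; have [i xi] := cov x xW.
  by exists i; rewrite -fx bag'P // fx.
- move=> u v uW vW euv; have [x [y [xW yW fx fy exy]]] := el u v uW vW euv.
  have [i /andP[xi yi]] := edg x y xW yW exy.
  by exists i; rewrite -fx -fy !bag'P // ?fx ?fy.
move=> w wW i j /imsetP[x0]; rewrite inE => /andP[x0i _] fx0.
move=> /imsetP[y0]; rewrite inE => /andP[y0j _] fy0.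
set r' := (X in connect X).
pose beta := [set x in W | f x == w].
have lift : forall x i m, x \in beta -> x \in bag i -> x \in bag m -> connect r' i m.
  move=> x i1 m xb xi xm; move: xb; rewrite inE => /andP[xW /eqP fx].
  apply: connect_sub (con x xW i1 m xi xm) => a b /= /and3P[rab xa xb].
  by apply: connect1; rewrite /r' /= rab -fx !bag'P // fx.
have main : forall p x i, x \in beta -> x \in bag i ->
   path (restr e beta) x p -> forall j, last x p \in bag j -> connect r' i j.
  elim=> [|z p IH] x i1 xb xi /=.
    by move=> _ j1 xj; apply: (lift x).
  move=> /andP[/and3P[exz _ zb] pp] j1 lj.
  have xW : x \in W by move: xb; rewrite inE => /andP[].
  have zW : z \in W by move: zb; rewrite inE => /andP[].
  have [m /andP[xm zm]] := edg x z xW zW exz.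
  exact: connect_trans (lift x _ _ xb xi xm) (IH z m zb zm pp j1 lj).
have x0b : x0 \in beta by rewrite inE fx0 eqxx (subsetP (bsub i) _ x0i).
have y0b : y0 \in beta by rewrite inE fy0 eqxx (subsetP (bsub j) _ y0j).
have /connectP [p pp pl] := bc w wW x0 y0 x0b y0b.
by apply: (main p x0) => //; rewrite -pl.
Qed.

Lemma tw_sub (k : nat) (W W' : {set T}) (e e' : rel T) :
  tw_le k W e -> W' \subset W ->
  (forall u v, u \in W' -> v \in W' -> e' u v -> e u v) -> tw_le k W' e'.
Proof.
move=> tw sW ee; apply: (tw_minor (f := id) tw).
- by move=> w wW; exists w => //; apply: (subsetP sW).
- move=> w wW x y; rewrite !inE => /andP[_ /eqP ->] /andP[_ /eqP ->].
  exact: connect0.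
- move=> u v uW vW euv; exists u, v; split=> //; try exact: (subsetP sW).
  exact: ee.
Qed.

End Minor.

Lemma conn_map (A B : finType) (ra : rel A) (rb : rel B) (g : A -> B) x y :
  (forall a b, ra a b -> rb (g a) (g b)) -> connect ra x y -> connect rb (g x) (g y).
Proof.
move=> h /connectP [p pp ->]; elim: p x pp => [|z p IH] x /=.
  by move=> _; apply: connect0.
move=> /andP[rxz pz]; apply: connect_trans (connect1 (h _ _ rxz)) (IH _ pz).
Qed.

Section Glue.
Variable T : finType.

Lemma tw_glue k (W1 W2 : {set T}) (e : rel T) v :
  symmetric e ->
  tw_le k W1 e -> tw_le k W2 e ->
  (forall x, x \in W1 -> x \in W2 -> x = v) ->
  (forall x y, x \in W1 -> x \notin W2 -> y \in W2 -> y \notin W1 -> ~~ e x y) ->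
  tw_le k (W1 :|: W2) e.
Proof.
move=> esym [I1 [r1 [b1 [[s1 ir1 n1 c1 E1] [bs1 bz1] cov1 ed1 con1]]]].
move=> [I2 [r2 [b2 [[s2 ir2 n2 c2 E2] [bs2 bz2] cov2 ed2 con2]]]] inter cross.
have [i1 hi1] : exists i : I1, v \in W1 -> v \in b1 i.
  case: (boolP (v \in W1)) => vW; first by have [i vi] := cov1 v vW; exists i.
  by have /card_gt0P [i _] := n1; exists i.
have [i2 hi2] : exists i : I2, v \in W2 -> v \in b2 i.
  case: (boolP (v \in W2)) => vW; first by have [i vi] := cov2 v vW; exists i.
  by have /card_gt0P [i _] := n2; exists i.
pose J := (I1 + I2)%type.
pose r (a b : J) := match a, b with
  | inl x, inl y => r1 x y | inr x, inr y => r2 x y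
  | inl x, inr y => (x == i1) && (y == i2) | inr x, inl y => (x == i2) && (y == i1) end.
pose bag (a : J) := match a with inl x => b1 x | inr y => b2 y end.
have rsym : symmetric r.
  by move=> [x|x] [y|y] /=; [apply: s1 | rewrite andbC | rewrite andbC | apply: s2].
have hub : forall a, connect r a (inl i1).
  move=> [x|y].
    by apply: (conn_map (rb := r) (g := inl)) (c1 x i1).
  apply: connect_trans (conn_map (rb := r) (g := inr) _ (c2 y i2)) _ => //.
  by apply: connect1; rewrite /= !eqxx.
exists J, r, bag; split.
- split=> //.
  + by move=> [x|x] /=; rewrite ?ir1 ?ir2.
  + by rewrite card_sum addn_gt0 n1.
  + move=> a b; apply: connect_trans (hub a) _.
    by rewrite (sym_connect_sym rsym); apply: hub.
  + pose g1 := fun p : I1 * I1 => (inl p.1 : J, inl p.2 : J).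
    pose g2 := fun p : I2 * I2 => (inr p.1 : J, inr p.2 : J).
    pose A1 := g1 @: [set p : I1 * I1 | r1 p.1 p.2].
    pose A2 := g2 @: [set p : I2 * I2 | r2 p.1 p.2].
    pose P := [set (inl i1 : J, inr i2 : J); (inr i2 : J, inl i1 : J)].
    have g1i : injective g1 by move=> [a b] [c d] [-> ->].
    have g2i : injective g2 by move=> [a b] [c d] [-> ->].
    have m1 : forall p q : J, ((p, q) \in A1) =
        (if (p, q) is (inl x, inl y) then r1 x y else false).
      move=> [x|x] [y|y].
      + by rewrite (mem_imset _ (x, y) g1i) inE.
      + by apply/imsetP => [[[a b] _ ]].
      + by apply/imsetP => [[[a b] _ ]].
      + by apply/imsetP => [[[a b] _ ]].
    have m2 : forall p q : J, ((p, q) \in A2) =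
        (if (p, q) is (inr x, inr y) then r2 x y else false).
      move=> [x|x] [y|y].
      + by apply/imsetP => [[[a b] _ ]].
      + by apply/imsetP => [[[a b] _ ]].
      + by apply/imsetP => [[[a b] _ ]].
      + by rewrite (mem_imset _ (x, y) g2i) inE.
    have ll : forall a b : I1, (inl a == inl b :> J) = (a == b).
      by move=> a b; apply/eqP/eqP => [[]|->].
    have rr : forall a b : I2, (inr a == inr b :> J) = (a == b).
      by move=> a b; apply/eqP/eqP => [[]|->].
    have lr : forall (a : I1) (b : I2), (inl a == inr b :> J) = false.
      by move=> a b; apply/eqP.
    have rl : forall (a : I2) (b : I1), (inr a == inl b :> J) = false.
      by move=> a b; apply/eqP.
    have eqE : [set p : J * J | r p.1 p.2] = A1 :|: A2 :|: P.
      apply/setP => [[p q]]; rewrite !inE m1 m2.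
      by case: p q => [x|x] [y|y] /=; rewrite ?xpair_eqE /= ?ll ?rr ?lr ?rl ?andbF ?orbF.
    have d12 : A1 :&: A2 = set0.
      by apply/setP => [[p q]]; rewrite !inE m1 m2; case: p q => [x|x] [y|y]; rewrite /= ?andbF.
    have d3 : (A1 :|: A2) :&: P = set0.
      apply/setP => [[p q]]; rewrite !inE m1 m2.
      by case: p q => [x|x] [y|y] /=; rewrite ?xpair_eqE /= ?ll ?rr ?lr ?rl ?andbF ?orbF.
    rewrite eqE cardsU d3 cards0 subn0 cardsU d12 cards0 subn0 cards2 /=.
    rewrite !card_imset // E1 E2 card_sum.
    by move: n1 n2; lia.
- split.
    by move=> [x|x] /=; [apply: subset_trans (bs1 x) (subsetUl _ _) |
                         apply: subset_trans (bs2 x) (subsetUr _ _)].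
  by move=> [x|x] /=.
- move=> u; rewrite inE => /orP[uW|uW].
    by have [i ui] := cov1 u uW; exists (inl i).
  by have [i ui] := cov2 u uW; exists (inr i).
- move=> u w; rewrite !inE => uW wW euw.
  have both1 : u \in W1 -> w \in W1 -> exists i : J, (u \in bag i) && (w \in bag i).
    by move=> a b; have [i hi] := ed1 u w a b euw; exists (inl i).
  have both2 : u \in W2 -> w \in W2 -> exists i : J, (u \in bag i) && (w \in bag i).
    by move=> a b; have [i hi] := ed2 u w a b euw; exists (inr i).
  case: (boolP (u \in W1)) => u1; case: (boolP (w \in W1)) => w1; first exact: both1.
  + case: (boolP (u \in W2)) => u2; first by apply: both2; move: wW; rewrite (negbTE w1).
    have w2 : w \in W2 by move: wW; rewrite (negbTE w1).
    by move: (cross u w u1 u2 w2 w1); rewrite euw.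
  + case: (boolP (w \in W2)) => w2; first by apply: both2; move: uW; rewrite (negbTE u1).
    have u2 : u \in W2 by move: uW; rewrite (negbTE u1).
    by move: (cross w u w1 w2 u2 u1); rewrite esym euw.
  + by apply: both2; [move: uW | move: wW]; rewrite ?(negbTE u1) ?(negbTE w1).
- move=> u uW a b.
  case: a => [x|x]; case: b => [y|y] /= ux uy.
  + apply: (conn_map (g := inl) _ (con1 u (subsetP (bs1 x) _ ux) x y ux uy)).
    by move=> a b /=.
  + have uv : u = v by apply: inter; [apply: (subsetP (bs1 x)) | apply: (subsetP (bs2 y))].
    subst u.
    have vW1 : v \in W1 by apply: (subsetP (bs1 x)).
    have vW2 : v \in W2 by apply: (subsetP (bs2 y)).
    apply: connect_trans (conn_map (g := inl) _ (con1 v vW1 x i1 ux (hi1 vW1))) _.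
      by move=> a b /=.
    apply: (@connect_trans _ _ (inr i2 : J)).
      by apply: connect1; rewrite /= !eqxx hi1 // hi2.
    apply: (conn_map (g := inr) _ (con2 v vW2 i2 y (hi2 vW2) uy)).
    by move=> a b /=.
  + have uv : u = v by apply: inter; [apply: (subsetP (bs1 y)) | apply: (subsetP (bs2 x))].
    subst u.
    have vW1 : v \in W1 by apply: (subsetP (bs1 y)).
    have vW2 : v \in W2 by apply: (subsetP (bs2 x)).
    apply: connect_trans (conn_map (g := inr) _ (con2 v vW2 x i2 ux (hi2 vW2))) _.
      by move=> a b /=.
    apply: (@connect_trans _ _ (inl i1 : J)).
      by apply: connect1; rewrite /= !eqxx hi1 // hi2.
    apply: (conn_map (g := inl) _ (con1 v vW1 i1 y (hi1 vW1) uy)).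
    by move=> a b /=.
  + apply: (conn_map (g := inr) _ (con2 u (subsetP (bs2 x) _ ux) x y ux uy)).
    by move=> a b /=.
Qed.

End Glue.


Section Paths.
Variable T : finType.
Variable e : rel T.
Hypothesis esym : symmetric e.
Hypothesis eirr : irreflexive e.

Lemma conn_in (W : {set T}) a x : a \in W -> connect (restr e W) a x -> x \in W.
Proof.
move=> aW /connectP [p pp ->]; elim: p a aW pp => [|z p IH] a aW //=.
by move=> /andP[/and3P[_ _ zW] pp]; apply: IH.
Qed.

Lemma first_step (W : {set T}) a b : a != b -> connect (restr e W) a b ->
  exists z, [/\ z \in W, z != a & e a z].
Proof.
move=> ab /connectP [[|z p] pp bl]; first by move: ab; rewrite bl eqxx.
move: pp => /= /andP[/and3P[eaz _ zW] _]; exists z; split=> //.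
by apply/negP => /eqP za; move: eaz; rewrite za eirr.
Qed.

Lemma exit_vertex (A : {set T}) a b : a \in A -> a != b -> connect (restr e A) a b ->
  exists u, connect (restr e (A :\ b)) a u /\ e u b.
Proof.
move=> aA ab /connectP [p pp bl].
have aA' : a \in A :\ b by rewrite !inE ab aA.
suff claim : forall p x, x \in A :\ b -> path (restr e A) x p -> b = last x p ->
    connect (restr e (A :\ b)) a x -> exists u, connect (restr e (A :\ b)) a u /\ e u b.
  exact: (claim p a aA' pp bl (connect0 _ _)).
elim=> [|z {}p IH] x /= xA' {}pp {}bl cx.
  by move: xA'; rewrite bl !inE eqxx.
move: pp => /andP[/and3P[exz xA zA] pp].
case: (eqVneq z b) => [zb|zb]; first by exists x; split; [|rewrite -zb].
have zA' : z \in A :\ b by rewrite !inE zb zA.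
apply: (IH z zA' pp bl); apply: connect_trans cx (connect1 _).
by rewrite /restr /= exz zA' xA'.
Qed.

Lemma comp_conn (W : {set T}) a :
  connected_in e [set x | connect (restr e W) a x].
Proof.
set R := [set x | connect (restr e W) a x].
have step : forall p y, y \in R -> connect (restr e R) a y ->
    path (restr e W) y p -> connect (restr e R) a (last y p).
  elim=> [|z p IH] y yR cy //=.
  move=> /andP[/and3P[eyz yW zW] pp].
  have zR : z \in R.
    move: yR; rewrite !inE => cy'.
    by apply: connect_trans cy' (connect1 _); rewrite /restr /= eyz yW zW.
  apply: (IH z zR _ pp); apply: connect_trans cy (connect1 _).
  by rewrite /restr /= eyz yR zR.
have key : forall x, x \in R -> connect (restr e R) a x.
  move=> x; rewrite inE => /connectP [p pp ->]; apply: step pp.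
    by rewrite inE connect0.
  exact: connect0.
move=> x y xR yR; apply: connect_trans (key y yR).
by rewrite (sym_connect_sym (restr_sym esym R)); apply: key.
Qed.

End Paths.


Lemma nbhP (T : finType) (V U : {set T}) (e : rel T) y :
  reflect (exists2 x, x \in U & [/\ e x y, y \in V & y \notin U]) (y \in nbh V e U).
Proof.
rewrite /nbh inE; apply: (iffP andP).
  by move=> [] ; rewrite inE => /andP[yU yV] /existsP[x /andP[xU exy]]; exists x.
by move=> [x xU [exy yV yU]]; split; [rewrite inE yU yV | apply/existsP; exists x; rewrite xU].
Qed.

Lemma forward (T : finType) (V : {set T}) (e : rel T) t (B1 : {set T}) a1 :
  symmetric e -> irreflexive e -> B1 \subset V -> a1 \in B1 -> connected_in e B1 ->
  has_solution V e t -> has_solution (contract_V V B1 a1) (contract_e V e B1 a1) t.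
Proof.
move=> esym eirr B1V a1B1 cB1 [S [SV St tw]].
case: (eqVneq (S :&: B1) set0) => [SB|SB].
- have SnB : forall x, x \in B1 -> x \notin S.
    move=> x xB; apply/negP => xS.
    by have := in_set0 x; rewrite -SB inE xS xB.
  exists S; split=> //.
    apply/subsetP => x xS; rewrite /contract_V !inE (subsetP SV _ xS) andbT.
    by apply/negP => /andP[_ xB]; move: (SnB x xB); rewrite xS.
  pose f x := if x \in B1 then a1 else x.
  apply: (tw_minor (f := f) tw).
  + move=> w; rewrite /contract_V !inE => /andP[wS /andP[wB wV]]; exists w.
      by rewrite inE wS wV.
    rewrite /f; case: ifP => // wB1; move: wB; rewrite wB1 andbT negbK.
    by move/eqP.
  + move=> w _; case: (eqVneq w a1) => [->|wa].
      move=> x y; rewrite !inE => /andP[_ /eqP fx] /andP[_ /eqP fy].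
      have xB : x \in B1.
        apply/negPn/negP => xn; move: fx; rewrite /f (negbTE xn) => xa1; by move: xn; rewrite xa1 a1B1.
      have yB : y \in B1.
        apply/negPn/negP => xn; move: fy; rewrite /f (negbTE xn) => xa1; by move: xn; rewrite xa1 a1B1.
      apply: connect_restr_mono (cB1 x y xB yB).
      apply/subsetP => z zB; rewrite !inE /f zB eqxx andbT (SnB _ zB).
      by rewrite (subsetP B1V _ zB).
    move=> x y; rewrite !inE => /andP[_ /eqP fx] /andP[_ /eqP fy].
    have xw : x = w by move: fx; rewrite /f; case: ifP => // _ h; move: wa; rewrite -h eqxx.
    have yw : y = w by move: fy; rewrite /f; case: ifP => // _ h; move: wa; rewrite -h eqxx.
    by rewrite xw yw; apply: connect0.
  + have fid : forall w, w \in contract_V V B1 a1 :\: S -> f w = w.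
      move=> w; rewrite /contract_V !inE /f => /andP[_ /andP[wB _]].
      by case: ifP => // wB1; move: wB; rewrite wB1 andbT negbK => /eqP.
    have inW : forall w, w \in contract_V V B1 a1 :\: S -> w \in V :\: S.
      by move=> w; rewrite /contract_V !inE => /andP[-> /andP[_ ->]].
    move=> u v uW vW; rewrite /contract_e /= => /andP[uv].
    case: (eqVneq u a1) => [ua|ua].
      move=> /nbhP [z zB [ezv vV vB]]; exists z, v; split=> //.
      * by rewrite inE (SnB _ zB) (subsetP B1V _ zB).
      * exact: inW.
      * by rewrite /f zB ua.
      * by rewrite /f (negbTE vB).
    case: (eqVneq v a1) => [va|va].
      move=> /nbhP [z zB [ezu uV uB]]; exists u, z; split=> //.
      * exact: inW.
      * by rewrite inE (SnB _ zB) (subsetP B1V _ zB).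
      * by rewrite /f (negbTE uB).
      * by rewrite /f zB va.
      * by rewrite esym.
    by move=> euv; exists u, v; split=> //; [apply: inW | apply: inW | apply: fid | apply: fid].
- exists ((S :\: B1) :|: [set a1]); split.
  + rewrite subUset sub1set /contract_V !inE eqxx (subsetP B1V _ a1B1) /= andbT.
    apply/subsetP => x; rewrite !inE => /andP[xB xS].
    by rewrite (subsetP SV _ xS) (negbTE xB) andbF.
  + apply: leq_trans St; rewrite cardsU cards1.
    have := cardsID B1 S; have : 0 < #|S :&: B1| by rewrite card_gt0.
    move: (#|S :\: B1 :&: [set a1]|) => n; lia.
  + apply: (tw_sub tw).
      apply/subsetP => x; rewrite /contract_V !inE => /andP[h1 /andP[h2 xV]].
      rewrite xV andbT; apply/negP => xS.
      case: (eqVneq x a1) h1 h2 => [->|xa]; first by rewrite orbT.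
      by rewrite /= orbF => h1 h2; move: h1; rewrite h2 xS.
    move=> u v; rewrite /contract_V !inE => /andP[/norP[_ ua] _] /andP[/norP[_ va] _].
    by rewrite /contract_e /= (negbTE ua) (negbTE va) => /andP[].
Qed.

End Helpers.
Import Helpers.


Theorem mainTheorem17 (T : finType) (V : {set T}) (e : rel T) (t : nat)
    (X C B1 B2 B3 : {set T}) (a1 a2 a3 a4 : T) :
  symmetric e -> irreflexive e ->
  ~ trivial_instance V e t ->
  modulator V e X ->
  component V e X C ->
  cutv e C a1 -> cutv e C a2 -> cutv e C a3 -> cutv e C a4 ->
  block e C B1 -> block e C B2 -> block e C B3 ->
  uniq [:: a1; a2; a3; a4] -> uniq [:: B1; B2; B3] ->
  a1 \in B1 -> a2 \in B1 -> a2 \in B2 -> a3 \in B2 -> a3 \in B3 -> a4 \in B3 ->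
  nbh V e ((B1 :|: B2 :|: B3) :\: [set a1; a4]) = [set a1; a4] ->
  (has_solution V e t <->
   has_solution (contract_V V B1 a1) (contract_e V e B1 a1) t).
Proof.
move=> esym eirr ntriv [XV twX] [Cne CVX Cconn CnX] _ _ _ _ k1 k2 k3 ua uB.
move=> a1B1 a2B1 a2B2 a3B2 a3B3 a4B3 hN.
move: ua => /= /and4P[]; rewrite !inE !negb_or => /and3P[n12 n13 n14] /andP[n23 n24] n34 _.
move: uB => /= /and3P[]; rewrite !inE negb_or => /andP[m12 m13] m23 _.
have CV : C \subset V by apply: subset_trans CVX (subsetDl _ _).
have [s1 b1 _] := k1; have [s2 b2 _] := k2; have [s3 b3 _] := k3.
have b1c : connected_in e B1 by case: b1 => _ [].
have B1V : B1 \subset V := subset_trans s1 CV.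
split; first by apply: forward.
have F2 : forall w, w \in B1 -> w \in B2 -> w = a2.
  move=> w wB1 wB2; apply/eqP/negPn/negP => wa.
  by move: m12; rewrite (shared2 esym k1 k2 wB1 wB2 a2B1 a2B2 wa) eqxx.
have F3 : forall w, w \in B2 -> w \in B3 -> w = a3.
  move=> w wB2 wB3; apply/eqP/negPn/negP => wa.
  by move: m23; rewrite (shared2 esym k2 k3 wB2 wB3 a3B2 a3B3 wa) eqxx.
have F4 : forall w, w \in B1 -> w \in B3 -> False.
  move=> w wB1 wB3.
  case: (eqVneq w a2) => [wa|wa2].
    by move: n23; rewrite -(F3 a2 a2B2) ?eqxx // -wa.
  case: (eqVneq w a3) => [wa|wa3].
    by move: n23; rewrite (F2 a3) ?eqxx // -wa.
  have := tri_blocks esym k1 k2 k3 a2B1 a2B2 a3B2 a3B3 wB1 wB3 (x := w) (y := w).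
  by rewrite eqxx => /(_ isT n23 wa2 wa2 wa3 wa3) h; move: m12; rewrite h eqxx.
have F6 : forall y x, y \in B1 -> y != a2 -> x \in B2 :|: B3 -> x != a2 -> x != a4 ->
    e y x -> False.
  move=> y x yB ya; rewrite inE => /orP[xB|xB] xa xa4 eyx.
    by move: m12; rewrite (edge2 esym k1 k2 a2B1 a2B2 yB xB ya xa eyx) eqxx.
  case: (boolP (x \in B2)) => xB2.
    by move: m12; rewrite (edge2 esym k1 k2 a2B1 a2B2 yB xB2 ya xa eyx) eqxx.
  have ya3 : y != a3.
    by apply/negP => /eqP yeq; move: n23; rewrite -yeq -(F2 y yB) ?eqxx // yeq.
  have xa3 : x != a3 by apply/negP => /eqP xeq; move: xB2; rewrite xeq a3B2.
  have := tri_blocks esym k1 k2 k3 a2B1 a2B2 a3B2 a3B3 yB xB (x := y) (y := x).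
  by rewrite eyx orbT => /(_ isT n23 ya xa ya3 xa3) h; move: m12; rewrite h eqxx.
set D := B1 :|: B2 :|: B3 in hN *.
set I := D :\: [set a1; a4] in hN *.
have DC : D \subset C by rewrite !subUset s1 s2 s3.
have DV : D \subset V := subset_trans DC CV.
have a4nB1 : a4 \notin B1 by apply/negP => h; apply: (F4 a4).
have a1D : a1 \in D by rewrite !inE a1B1.
have a4D : a4 \in D by rewrite !inE a4B3 !orbT.
have a1V : a1 \in V := subsetP DV _ a1D.
have a4V : a4 \in V := subsetP DV _ a4D.
have a1nI : a1 \notin I by rewrite !inE eqxx.
have a4nI : a4 \notin I by rewrite !inE eqxx orbT.
have DI : forall x, x \in D -> x \notin I -> (x == a1) || (x == a4).
  by move=> x; rewrite !inE negb_and negbK => ->; rewrite orbF.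
have B1I : forall x, x \in B1 -> x \notin I -> x = a1.
  move=> x xB xI; have xD : x \in D by rewrite !inE xB.
  case/orP: (DI x xD xI) => /eqP // xa4.
  by move: a4nB1; rewrite -xa4 xB.
have hIe : forall x y, x \in I -> y \in V -> y \notin I -> e x y -> (y == a1) || (y == a4).
  move=> x y xI yV yI exy.
  have : y \in nbh V e I by apply/nbhP; exists x.
  by rewrite hN !inE.
move=> [S' [S'V' S't tw']].
have S'V : S' \subset V by apply: subset_trans S'V' (subsetDl _ _).
have twD : forall S, tw_le 2 (D :\: S) e.
  move=> S; apply: (tw_sub twX) => //.
  by apply: subset_trans (subsetDl _ _) (subset_trans DC CVX).
have eQ : forall u v, u \in V -> u \notin I -> v \in V -> v \notin I -> e u v ->
    contract_e V e B1 a1 u v.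
  move=> u v uV uI vV vI euv.
  have uv : u != v by apply/negP => /eqP uv; move: euv; rewrite uv eirr.
  rewrite /contract_e /= uv /=.
  case: (eqVneq u a1) => [ua|ua].
    apply/nbhP; exists a1 => //; split=> //; first by rewrite -ua.
    apply/negP => vB; move: uv; rewrite ua (B1I v vB) ?eqxx //.
  case: (eqVneq v a1) => [va|va] //.
  apply/nbhP; exists a1 => //; split=> //; first by rewrite -va esym.
  apply/negP => uB; move: ua; rewrite (B1I u uB) ?eqxx //.
have twQ : forall S : {set T}, S' \subset S :|: I -> tw_le 2 (V :\: I :\: S) e.
  move=> S hS; apply: (tw_sub tw').
    apply/subsetP => x; rewrite [x \in V :\: I :\: S]inE [x \in V :\: I]inE.
    move=> /andP[xS /andP[xI xV]].
    rewrite /contract_V [x \in _ :\: S']inE [x \in V :\: _]inE xV andbT.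
    apply/andP; split.
      apply/negP => xS'; have := subsetP hS x xS'.
      by rewrite inE (negbTE xS) (negbTE xI).
    rewrite inE negb_and negbK; apply/orP; case: (boolP (x \in B1)) => xB; last by right.
    by left; rewrite (B1I x xB xI) set11.
  move=> u v; rewrite ![_ \in V :\: I :\: S]inE ![_ \in V :\: I]inE.
  move=> /andP[uS /andP[uI uV]] /andP[vS /andP[vI vV]] euv.
  have uv : u != v by apply/negP => /eqP uv; move: euv; rewrite uv eirr.
  rewrite /contract_e /= uv /=.
  case: (eqVneq u a1) => [ua|ua].
    apply/nbhP; exists a1 => //; split=> //; first by rewrite -ua.
    apply/negP => vB; move: uv; rewrite ua (B1I v vB) ?eqxx //.
  case: (eqVneq v a1) => [va|va] //.
  apply/nbhP; exists a1 => //; split=> //; first by rewrite -va esym.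
  apply/negP => uB; move: ua; rewrite (B1I u uB) ?eqxx //.
have ID : I \subset D := subsetDl _ _.
have memQ : forall (S : {set T}) x, (x \in V :\: I :\: S) = [&& x \notin S, x \notin I & x \in V].
  by move=> S x; rewrite !inE.
have memDS : forall (S : {set T}) x, (x \in D :\: S) = (x \notin S) && (x \in D).
  by move=> S x; rewrite [x \in D :\: S]inE.
have caseX : forall S : {set T}, S \subset V -> #|S| <= t -> S' \subset S :|: I ->
    (a1 \in S) || (a4 \in S) -> has_solution V e t.
  move=> S SV St hS hA; exists S; split=> //.
  have eqVS : V :\: S = (V :\: I :\: S) :|: (D :\: S).
    apply/setP => x; rewrite [in LHS]inE [x \in _ :|: _]inE memQ (memDS S x).
    case: (x \in S) => //=; case xD: (x \in D).
      by rewrite (subsetP DV _ xD) orbT.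
    have -> : x \notin I by apply/negP => /(subsetP ID); rewrite xD.
    by rewrite orbF.
  rewrite eqVS; apply: (tw_glue (v := if a1 \in S then a4 else a1) esym (twQ S hS) (twD S)).
    move=> x; rewrite memQ memDS => /and3P[xS xI _] /andP[_ xD].
    case/orP: (DI x xD xI) => /eqP xa; subst x.
      by move: hA; rewrite (negbTE xS).
    by case: ifP => // a1S; move: hA xS; rewrite a1S => /= ->.
  move=> x y; rewrite !memQ (memDS S x) (memDS S y) => /and3P[xS xI xV] hx /andP[yS yD] hy.
  have yI : y \in I by apply/negPn/negP => yI; move: hy; rewrite yS yI (subsetP DV _ yD).
  apply/negP => exy.
  have := hIe y x yI xV xI; rewrite esym => /(_ exy) /orP[] /eqP xa; move: hx; rewrite xS xa /=.
    by rewrite a1D.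
  by rewrite a4D.
case: (boolP ((S' :&: I != set0) || (a1 \in S') || (a4 \in S'))) => hX.
  case: (boolP (S' :&: I != set0)) => hSI.
    apply: (caseX ((S' :\: I) :|: [set a1])).
    - by rewrite subUset sub1set a1V andbT; apply: subset_trans (subsetDl _ _) S'V.
    - apply: leq_trans S't; rewrite cardsU cards1.
      apply: leq_trans (leq_subr _ _) _.
      by rewrite -(cardsID I S') [X in _ <= X]addnC leq_add2l card_gt0.
    - apply/subsetP => x xS; apply/setUP; case: (boolP (x \in I)) => xI; [by right | left].
      by apply/setUP; left; apply/setDP.
    - by apply/orP; left; apply/setUP; right; rewrite set11.
  apply: (caseX S') => //; first exact: subsetUl.
  by move: hX; rewrite (negbTE hSI).
move: hX; rewrite !negb_or negbK => /andP[/andP[/eqP hSI a1S] a4S].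
have S'D : forall x, x \in D -> x \notin S'.
  move=> x xD; apply/negP => xS.
  case: (boolP (x \in I)) => xI.
    by have := in_set0 x; rewrite -hSI inE xS xI.
  by case/orP: (DI x xD xI) => /eqP xa; [move: a1S | move: a4S]; rewrite -xa xS.
have twQ' := twQ S' (subsetUl _ _).
set Q := V :\: I :\: S' in twQ'.
have a1Q : a1 \in Q by rewrite /Q memQ a1S a1nI a1V.
have a4Q : a4 \in Q by rewrite /Q memQ a4S a4nI a4V.
case: (boolP (connect (restr e Q) a1 a4)) => ha.
  exfalso; apply: ntriv; right; right; right.
  have a4nB2 : a4 \notin B2.
    by apply/negP => h; move: n34; rewrite (F3 a4 h a4B3) eqxx.
  have a2nB3 : a2 \notin B3 by apply/negP => h; apply: (F4 a2).
  have a1nB2 : a1 \notin B2 by apply/negP => h; move: n12; rewrite (F2 a1 a1B1 h) eqxx.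
  have a1nB3 : a1 \notin B3 by apply/negP => h; apply: (F4 a1).
  set I2 := (B2 :|: B3) :\: [set a2; a4].
  have mI2 : forall x, x \in I2 -> [/\ x \in B2 :|: B3, x != a2 & x != a4].
    by move=> x /setDP [xB]; rewrite in_set2 negb_or => /andP[].
  have I2I : forall x, x \in I2 -> x \in I.
    move=> x /mI2 [xB xa2 xa4]; apply/setDP; split.
      by move: xB; rewrite !inE => /orP[] ->; rewrite ?orbT.
    rewrite !inE negb_or xa4 andbT; apply/negP => /eqP xa; move: xB.
    by rewrite xa !inE (negbTE a1nB2) (negbTE a1nB3).
  have I2B1 : forall x, x \in I2 -> x \notin B1.
    move=> x /mI2 [xB xa2 _]; apply/negP => xB1; move: xB; rewrite inE => /orP[] xB.
      by move: xa2; rewrite (F2 x xB1 xB) eqxx.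
    by apply: (F4 x).
  have a3I2 : a3 \in I2.
    by apply/setDP; split; [rewrite inE a3B2 | rewrite !inE negb_or eq_sym n23 n34].
  have hN2 : nbh V e I2 = [set a2; a4].
    apply/setP => y; apply/idP/idP.
      move=> /nbhP [x xI2 [exy yV yI2]]; rewrite !inE.
      apply/negPn/negP; rewrite negb_or => /andP[ya2 ya4].
      have yB1 : (y \in B1) && (y != a2).
        rewrite ya2 andbT.
        case: (boolP (y \in I)) => yI.
          have yD : y \in D by move: yI => /setDP[].
          move: yD; rewrite !inE -orbA => /orP[//|yB]; case/negP: yI2.
          by apply/setDP; split; [rewrite inE | rewrite in_set2 negb_or ya2 ya4].
        case/orP: (hIe x y (I2I x xI2) yV yI exy) => /eqP ya; first by rewrite ya a1B1.
        by move: ya4; rewrite ya eqxx.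
      move: yB1 => /andP[yB1 ya2']; have [xB xa2 xa4] := mI2 x xI2.
      by apply: (F6 y x yB1 ya2' xB xa2 xa4); rewrite esym.
    rewrite in_set2 => /orP[] /eqP ->.
      have [z [zB za ez]] := first_step eirr n23 (b2.2.1 a2 a3 a2B2 a3B2).
      apply/nbhP; exists z; last split.
      + apply/setDP; split; first by rewrite inE zB.
        rewrite !inE negb_or za; apply/negP => /eqP zz; move: zB; rewrite zz.
        by rewrite (negbTE a4nB2).
      + by rewrite esym.
      + by rewrite (subsetP B1V _ a2B1).
      + by apply/negP => /mI2 [_ ]; rewrite eqxx.
    have n43 : a4 != a3 by rewrite eq_sym.
    have [z [zB za ez]] := first_step eirr n43 (b3.2.1 a4 a3 a4B3 a3B3).
    apply/nbhP; exists z; last split.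
    + apply/setDP; split; first by rewrite inE zB orbT.
      rewrite in_set2 negb_or za andbT; apply/negP => /eqP zz; move: zB; rewrite zz.
      by rewrite (negbTE a2nB3).
    + by rewrite esym.
    + by rewrite (subsetP DV _ a4D).
    + by apply/negP => /mI2 [_ _]; rewrite eqxx.
  have QI : forall x, x \in Q -> x \notin I by move=> x; rewrite /Q memQ => /and3P[].
  have QV : forall x, x \in Q -> x \in V by move=> x; rewrite /Q memQ => /and3P[].
  have QS : forall x, x \in Q -> x \notin S' by move=> x; rewrite /Q memQ => /and3P[].
  exists I2; split.
  - apply/subsetP => x /I2I xI; apply: (subsetP DV); exact: (subsetP ID).
  - by apply/set0Pn; exists a3.
  - have eqI2 : I2 = (B2 :\ a2) :|: (B3 :\ a4).
      apply/setP => x; apply/idP/idP.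
        move=> /mI2 [xB xa2 xa4]; move: xB; rewrite !inE xa2 xa4 /=.
        by move=> /orP[] ->; rewrite ?orbT.
      rewrite !inE => /orP[/andP[xa2 xB]|/andP[xa4 xB]].
        rewrite (negbTE xa2) xB /= andbT; apply/negP => /eqP e4; move: xB.
        by rewrite e4 (negbTE a4nB2).
      rewrite (negbTE xa4) xB orbT /= orbF andbT; apply/negP => /eqP e2; move: xB.
      by rewrite e2 (negbTE a2nB3).
    rewrite eqI2; apply: conn_union => //; try exact: bic_minus.
    by exists a3, a3; rewrite !inE eqxx a3B2 a3B3 (eq_sym a3 a2) n23 n34.
  rewrite hN2.
  pose R := [set x | connect (restr e (Q :\ a4)) a1 x].
  have a1Q' : a1 \in Q :\ a4 by apply/setD1P.
  have RQ : forall x, x \in R -> x \in Q :\ a4.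
    by move=> x; rewrite inE; apply: conn_in.
  have [z0 [cz0 ez0]] := exit_vertex a1Q n14 ha.
  have z0R : z0 \in R by rewrite inE.
  pose W := contract_V V B1 a1 :\: S'.
  have inW : forall x, x \in V -> x \notin S' -> (x \in B1 -> x = a1) -> x \in W.
    move=> x xV xS h; apply/setDP; split=> //; apply/setDP; split=> //.
    by apply/negP => /setD1P [xa xB]; move: xa; rewrite (h xB) eqxx.
  have a2nW : a2 \notin W.
    apply/negP => /setDP [/setDP [_ h] _]; case/negP: h.
    by apply/setD1P; split; [rewrite eq_sym | ].
  have RW : forall x, x \in R -> x \in W.
    move=> x /RQ /setD1P [_ xQ]; apply: inW; [exact: QV | exact: QS |].
    by move=> xB; apply: B1I => //; apply: QI.
  pose f x := if x \in R then a2 else x.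
  have a4nR : a4 \notin R by apply/negP => /RQ; rewrite !inE eqxx.
  have I2nR : forall w, w \in I2 -> w \notin R.
    by move=> w wI; apply/negP => /RQ /setD1P [_ /QI]; rewrite (I2I w wI).
  have Wcases : forall w, w \in I2 :|: [set a2; a4] ->
      w = a2 \/ [/\ w \in W, f w = w, w \notin B1, w \in V & w != a1].
    move=> w /setUP [wI2|]; last rewrite in_set2 => /orP [/eqP ->|/eqP ->]; [right| by left|right].
      have wB := I2B1 w wI2; have wV := subsetP DV _ (subsetP ID _ (I2I w wI2)).
      split=> //.
      + by apply: inW => //; [apply: S'D; exact: (subsetP ID _ (I2I w wI2)) | move=> h; move: wB; rewrite h].
      + by rewrite /f (negbTE (I2nR w wI2)).
      + by apply/negP => /eqP wa; move: wB; rewrite wa a1B1.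
    split=> //.
    + apply: inW; [done | exact: S'D | by move=> h; move: a4nB1; rewrite h].
    + by rewrite /f (negbTE a4nR).
    + by rewrite eq_sym.
  apply: (tw_minor (f := f) tw').
  - move=> w /Wcases [->|[wW fw _ _ _]]; last by exists w.
    exists a1; first by apply: inW => //; exact: S'D.
    by rewrite /f (_ : a1 \in R) // inE connect0.
  - move=> w hw x y /setIdP [xW /eqP fx] /setIdP [yW /eqP fy].
    case: (eqVneq w a2) => [wa|wa].
      have xR : x \in R.
        by apply/negPn/negP => xR; move: fx; rewrite /f (negbTE xR) wa => xa; move: a2nW; rewrite -xa xW.
      have yR : y \in R.
        by apply/negPn/negP => yR; move: fy; rewrite /f (negbTE yR) wa => ya; move: a2nW; rewrite -ya yW.
      have hh := (@comp_conn _ _ esym (Q :\ a4) a1 x y xR yR).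
      apply: connect_sub hh => u v /and3P[euv uR vR]; apply: connect1.
      have uQ : u \in Q by move: (RQ u uR) => /setD1P[].
      have vQ : v \in Q by move: (RQ v vR) => /setD1P[].
      rewrite /restr /= (eQ u v (QV u uQ) (QI u uQ) (QV v vQ) (QI v vQ) euv) /=.
      by apply/andP; split; apply/setIdP; split; [exact: RW | by rewrite /f uR wa | exact: RW | by rewrite /f vR wa].
    have xw : x = w.
      by move: fx; rewrite /f; case: ifP => // _ aw; move: wa; rewrite aw eqxx.
    have yw : y = w.
      by move: fy; rewrite /f; case: ifP => // _ aw; move: wa; rewrite aw eqxx.
    by rewrite xw yw connect0.
  - have z0W := RW z0 z0R.
    have fz0 : f z0 = a2 by rewrite /f z0R.
    have z0Q : z0 \in Q :\ a4 := RQ z0 z0R.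
    have z0a4 : z0 != a4 by move: z0Q => /setD1P[].
    have a2nbh : forall v, v \in V -> v \notin B1 -> e a2 v -> v \in nbh V e B1.
      by move=> v vV vB ev; apply/nbhP; exists a2.
    move=> u v hu hv; rewrite /torso_rel /= hN2 !in_set2.
    case/orP => [euv|/and3P[hu2 hv2 uv]].
      case: (Wcases u hu) => [ua|[uW fu uB uV ua1]]; case: (Wcases v hv) => [va|[vW fv vB vV va1]].
      + by move: euv; rewrite ua va eirr.
      + exists a1, v; split=> //; first by apply: inW => //; exact: S'D.
          by rewrite /f (_ : a1 \in R) // inE connect0.
        rewrite /contract_e /= eqxx eq_sym va1 /=.
        by apply: a2nbh => //; rewrite -ua.
      + exists u, a1; split=> //; first by apply: inW => //; exact: S'D.
          by rewrite /f (_ : a1 \in R) // inE connect0.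
        rewrite /contract_e /= ua1 (negbTE ua1) eqxx /=.
        by apply: a2nbh => //; rewrite -va esym.
      + exists u, v; split=> //.
        rewrite /contract_e /= (negbTE ua1) (negbTE va1) euv andbT.
        by apply/negP => /eqP uv; move: euv; rewrite uv eirr.
    have a4V' := subsetP DV _ a4D.
    have ea4 : contract_e V e B1 a1 z0 a4 && contract_e V e B1 a1 a4 z0.
      have h1 : (z0 == a4) = false by apply/negbTE.
      have h2 : (a4 == z0) = false by rewrite eq_sym.
      have h3 : (a4 == a1) = false by rewrite eq_sym; apply/negbTE.
      rewrite /contract_e /= h1 h2 h3 /=.
      case: (eqVneq z0 a1) => [za|za] /=.
        by apply/andP; split; apply/nbhP; exists a1 => //; rewrite -za.
      by rewrite ez0 esym ez0.
    case/andP: ea4 => ea4 ea4'.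
    have a4W : a4 \in W by apply: inW; [done | exact: S'D | by move=> h; move: a4nB1; rewrite h].
    have fa4 : f a4 = a4 by rewrite /f (negbTE a4nR).
    move: uv; case/orP: hu2 => /eqP ->; case/orP: hv2 => /eqP -> uv.
    - by rewrite eqxx in uv.
    - by exists z0, a4.
    - by exists a4, z0.
    - by rewrite eqxx in uv.
exists S'; split=> //.
pose Q1 := [set x in Q | connect (restr e Q) a1 x].
pose Q2 := Q :\: Q1.
have mQ1 : forall x, (x \in Q1) = (x \in Q) && connect (restr e Q) a1 x.
  by move=> x; rewrite /Q1 inE.
have mQ2 : forall x, (x \in Q2) = (x \notin Q1) && (x \in Q).
  by move=> x; rewrite /Q2 inE.
have Q1Q : Q1 \subset Q by apply/subsetP => x; rewrite mQ1 => /andP[].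
have Q2Q : Q2 \subset Q by apply/subsetP => x; rewrite mQ2 => /andP[].
have a1Q1 : a1 \in Q1 by rewrite mQ1 a1Q connect0.
have a4nQ1 : a4 \notin Q1 by rewrite mQ1 (negbTE ha) andbF.
have a4Q2 : a4 \in Q2 by rewrite mQ2 a4nQ1 a4Q.
have QI : forall x, x \in Q -> x \notin I by move=> x; rewrite /Q memQ => /and3P[].
have QV : forall x, x \in Q -> x \in V by move=> x; rewrite /Q memQ => /and3P[].
have Q1cl : forall x y, x \in Q1 -> y \in Q -> e x y -> y \in Q1.
  move=> x y; rewrite !mQ1 => /andP[xQ cx] yQ exy; rewrite yQ /=.
  by apply: connect_trans cx (connect1 _); rewrite /restr /= exy xQ yQ.
have twDe : tw_le 2 D e by apply: (tw_sub twX) => //; apply: subset_trans DC CVX.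
have tw1 : tw_le 2 (D :|: Q1) e.
  apply: (tw_glue (v := a1) esym twDe (tw_sub twQ' Q1Q (fun _ _ _ _ h => h))).
    move=> x xD xQ1; have xQ := subsetP Q1Q _ xQ1.
    case/orP: (DI x xD (QI x xQ)) => /eqP // xa; move: xQ1; rewrite xa.
    by rewrite (negbTE a4nQ1).
  move=> x y xD xQ1 yQ1 yD; apply/negP => exy.
  have yQ := subsetP Q1Q _ yQ1.
  case: (boolP (x \in I)) => xI.
    by case/orP: (hIe x y xI (QV y yQ) (QI y yQ) exy) => /eqP ya; move: yD; rewrite ya ?a1D ?a4D.
  case/orP: (DI x xD xI) => /eqP xa.
    by move: xQ1; rewrite xa a1Q1.
  have := Q1cl y x yQ1; rewrite xa => /(_ a4Q); rewrite esym -xa => /(_ exy).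
  by rewrite xa (negbTE a4nQ1).
have eqVS : V :\: S' = (D :|: Q1) :|: Q2.
  apply/setP => x; rewrite [in LHS]inE; apply/idP/idP.
    move=> /andP[xS xV]; apply/setUP.
    case: (boolP (x \in D)) => xD; first by left; apply/setUP; left.
    have xQ : x \in Q.
      rewrite /Q memQ xS xV andbT; apply/negP => /(subsetP ID); by rewrite (negbTE xD).
    case: (boolP (x \in Q1)) => xQ1; first by left; apply/setUP; right.
    by right; rewrite mQ2 xQ1 xQ.
  move=> /setUP [/setUP [xD|xQ1]|xQ2].
  - by rewrite (S'D x xD) (subsetP DV _ xD).
  - by move: (subsetP Q1Q _ xQ1); rewrite /Q memQ => /and3P[-> _ ->].
  - by move: (subsetP Q2Q _ xQ2); rewrite /Q memQ => /and3P[-> _ ->].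
rewrite eqVS; apply: (tw_glue (v := a4) esym tw1 (tw_sub twQ' Q2Q (fun _ _ _ _ h => h))).
  move=> x /setUP [xD|xQ1] xQ2; move: (xQ2); rewrite mQ2 => /andP[xnQ1 xQ].
    case/orP: (DI x xD (QI x xQ)) => /eqP // xa; move: xnQ1; rewrite xa.
    by rewrite a1Q1.
  by move: xnQ1; rewrite xQ1.
move=> x y /setUP hx xQ2 yQ2 hy; apply/negP => exy.
move: (yQ2); rewrite mQ2 => /andP[ynQ1 yQ].
have yD : y \notin D by apply: contra hy => yD; apply/setUP; left.
case: hx => [xD|xQ1]; last by move: ynQ1; rewrite (Q1cl x y xQ1 yQ exy).
case: (boolP (x \in I)) => xI.
  by case/orP: (hIe x y xI (QV y yQ) (QI y yQ) exy) => /eqP ya; move: yD; rewrite ya ?a1D ?a4D.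
case/orP: (DI x xD xI) => /eqP xa.
  by move: ynQ1; rewrite (Q1cl x y) // xa.
by move: xQ2; rewrite xa a4Q2.
Qed.
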